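(* Let $(H,\mu_H,\Delta_H,\alpha_H)$ be a Hom-bialgebra and $(C,\mu_C,\alpha_C)$ a right $H$-module Hom-algebra with action $c\otimes h\mapsto c\cdot h$, with $\alpha_H$ and $\alpha_C$ bijective. Define $R:C\otimes H\to H\otimes C$ by $R(c\otimes h)=\alpha_H^{-1}(h_1)\otimes\alpha_C^{-1}(c)\cdot\alpha_H^{-2}(h_2)$. Then $R$ is a Hom-twisting map between $H$ and $C$. Consequently $H\# C:=H\otimes_R C$ is a Hom-associative algebra with structure map $\alpha_H\otimes\alpha_C$ and multiplication $(h\# c)(h'\# c')=h\alpha_H^{-1}(h'_1)\#(\alpha_C^{-1}(c)\cdot\alpha_H^{-2}(h'_2))c'$.
   Context: Over a field $k$, no (co)units assumed; $\Delta(h)=h_1\otimes h_2$. Hom-associative algebra $(A,\mu,\alpha)$: $\alpha(aa')=\alpha(a)\alpha(a')$, $\alpha(a)(a'a'')=(aa')\alpha(a'')$. Hom-bialgebra $(H,\mu,\Delta,\alpha)$: $(H,\mu,\alpha)$ Hom-associative, $\Delta(h_1)\otimes\alpha(h_2)=\alpha(h_1)\otimes\Delta(h_2)$, $\Delta(hh')=h_1h'_1\otimes h_2h'_2$, $\Delta(\alpha(h))=\alpha(h_1)\otimes\alpha(h_2)$. Right $H$-module Hom-algebra: Hom-associative $(C,\mu_C,\alpha_C)$ with $c\otimes h\mapsto c\cdot h$ such that $\alpha_C(c\cdot h)=\alpha_C(c)\cdot\alpha_H(h)$, $(c\cdot h)\cdot\alpha_H(h')=\alpha_C(c)\cdot(hh')$,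 $(cc')\cdot\alpha_H^2(h)=(c\cdot h_1)(c'\cdot h_2)$. For Hom-associative $(A,\mu_A,\alpha_A),(B,\mu_B,\alpha_B)$, a Hom-twisting map between $A$ and $B$ is a linear $R:B\otimes A\to A\otimes B$ with $(\alpha_A\otimes\alpha_B)\circ R=R\circ(\alpha_B\otimes\alpha_A)$, $R\circ(\alpha_B\otimes\mu_A)=(\mu_A\otimes\alpha_B)\circ(\mathrm{id}_A\otimes R)\circ(R\otimes\mathrm{id}_A)$, $R\circ(\mu_B\otimes\alpha_A)=(\alpha_A\otimes\mu_B)\circ(R\otimes\mathrm{id}_B)\circ(\mathrm{id}_B\otimes R)$; $A\otimes_R B$ is $A\otimes B$ with product $(\mu_A\otimes\mu_B)\circ(\mathrm{id}_A\otimes R\otimes\mathrm{id}_B)$ and structure map $\alpha_A\otimes\alpha_B$. $h\# c$ denotes $h\otimes c$. *)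

(* Defs.v *)
(* Tensor products are not in the library: an element of
   V (x) W is represented by a formal sum of pure tensors (a seq of pairs),
   and two formal sums are equal in V (x) W iff every bilinear map out of
   V x W (into any k-vector space) takes the same value on them
   (universal property of the tensor product). *)
From HB Require Import structures.
From mathcomp Require Import all_boot all_order all_algebra.
Set Implicit Arguments. Unset Strict Implicit. Unset Printing Implicit Defensive.
Import Order.TTheory GRing.Theory Num.Theory.
Local Open Scope ring_scope.

Section TensorDefs.
Variable k : fieldType.

Definition linmap (V W : lmodType k) (f : V -> W) :=
  forall (a : k) (x y : V), f (a *: x + y) = a *: f x + f y.

Definition bilin (V W U : lmodType k) (f : V -> W -> U) :=
  (forall w, linmap (fun v => f v w)) /\ (forall v, linmap (f v)).

Definition trilin (V1 V2 V3 U : lmodType k) (f : V1 -> V2 -> V3 -> U) :=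
  [/\ (forall y z, linmap (fun x => f x y z)),
      (forall x z, linmap (fun y => f x y z)) &
      (forall x y, linmap (f x y))].

Definition tsum2 (V W U : lmodType k) (f : V -> W -> U) (s : seq (V * W)) : U :=
  \sum_(p <- s) f p.1 p.2.
Definition tsum3 (V1 V2 V3 U : lmodType k) (f : V1 -> V2 -> V3 -> U)
  (s : seq (V1 * V2 * V3)) : U := \sum_(p <- s) f p.1.1 p.1.2 p.2.

Definition teq2 (V W : lmodType k) (s t : seq (V * W)) :=
  forall (U : lmodType k) (f : V -> W -> U), bilin f -> tsum2 f s = tsum2 f t.
Definition teq3 (V1 V2 V3 : lmodType k) (s t : seq (V1 * V2 * V3)) :=
  forall (U : lmodType k) (f : V1 -> V2 -> V3 -> U), trilin f ->
    tsum3 f s = tsum3 f t.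

Definition tscale (V W : lmodType k) (a : k) (s : seq (V * W)) : seq (V * W) :=
  [seq (a *: p.1, p.2) | p <- s].
Definition tmap (V W V' W' : lmodType k) (f : V -> V') (g : W -> W')
  (s : seq (V * W)) : seq (V' * W') := [seq (f p.1, g p.2) | p <- s].

Definition lin_to2 (V W1 W2 : lmodType k) (D : V -> seq (W1 * W2)) :=
  forall (a : k) (x y : V), teq2 (D (a *: x + y)) (tscale a (D x) ++ D y).

Definition bilin_to2 (B A : lmodType k) (R : B -> A -> seq (A * B)) :=
  (forall a, lin_to2 (fun b => R b a)) /\ (forall b, lin_to2 (R b)).

Definition hom_assoc (A : lmodType k) (mu : A -> A -> A) (al : A -> A) :=
  [/\ bilin mu, linmap al,
      (forall x y, al (mu x y) = mu (al x) (al y)) &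
      (forall x y z, mu (al x) (mu y z) = mu (mu x y) (al z))].

(* Hom-bialgebra (no unit, no counit); Delta h = sum h_1 (x) h_2 *)
Definition hom_bialgebra (H : lmodType k) (mu : H -> H -> H)
  (D : H -> seq (H * H)) (al : H -> H) :=
  [/\ hom_assoc mu al, lin_to2 D,
      (forall h, teq3
         (flatten [seq [seq (q.1, q.2, al p.2) | q <- D p.1] | p <- D h])
         (flatten [seq [seq (al p.1, q.1, q.2) | q <- D p.2] | p <- D h])),
      (forall h h', teq2 (D (mu h h'))
         (flatten [seq [seq (mu p.1 q.1, mu p.2 q.2) | q <- D h'] | p <- D h])) &
      (forall h, teq2 (D (al h)) (tmap al al (D h)))].

Definition right_module_hom_algebra (H : lmodType k) (muH : H -> H -> H)
  (D : H -> seq (H * H)) (alH : H -> H)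
  (C : lmodType k) (muC : C -> C -> C) (alC : C -> C) (act : C -> H -> C) :=
  [/\ hom_assoc muC alC, bilin act,
      (forall c h, alC (act c h) = act (alC c) (alH h)),
      (forall c h h', act (act c h) (alH h') = act (alC c) (muH h h')) &
      (forall c c' h, act (muC c c') (alH (alH h)) =
         \sum_(p <- D h) muC (act c p.1) (act c' p.2))].

Definition hom_twisting (A : lmodType k) (muA : A -> A -> A) (alA : A -> A)
  (B : lmodType k) (muB : B -> B -> B) (alB : B -> B)
  (R : B -> A -> seq (A * B)) :=
  [/\ bilin_to2 R,
      (forall b a, teq2 (tmap alA alB (R b a)) (R (alB b) (alA a))),
      (forall b a a', teq2 (R (alB b) (muA a a'))
         (flatten [seq [seq (muA p.1 q.1, alB q.2) | q <- R p.2 a'] | p <- R b a])) &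
      (forall b b' a, teq2 (R (muB b b') (alA a))
         (flatten [seq [seq (alA p.1, muB p.2 q.2) | p <- R b q.1] | q <- R b' a]))].

Definition hom_assoc_tensor (A B : lmodType k)
  (m : seq (A * B) -> seq (A * B) -> seq (A * B))
  (al : seq (A * B) -> seq (A * B)) :=
  [/\
      [/\ (forall x x' y, teq2 x x' -> teq2 (m x y) (m x' y)),
      (forall x y y', teq2 y y' -> teq2 (m x y) (m x y')) &
      (forall x x', teq2 x x' -> teq2 (al x) (al x'))],
      (forall a x y, teq2 (m (tscale a x) y) (tscale a (m x y))),
      (forall a x y, teq2 (m x (tscale a y)) (tscale a (m x y))),
      (forall x y, teq2 (al (m x y)) (m (al x) (al y))) &
      (forall x y z, teq2 (m (al x) (m y z)) (m (m x y) (al z)))].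

End TensorDefs.

Definition smashR (k : fieldType) (H C : lmodType k) (D : H -> seq (H * H))
  (act : C -> H -> C) (alHi : H -> H) (alCi : C -> C) : C -> H -> seq (H * C) :=
  fun c h => [seq (alHi p.1, act (alCi c) (alHi (alHi p.2))) | p <- D h].

Definition smash_mul (k : fieldType) (H C : lmodType k) (muH : H -> H -> H)
  (D : H -> seq (H * H)) (muC : C -> C -> C) (act : C -> H -> C)
  (alHi : H -> H) (alCi : C -> C) (x y : seq (H * C)) : seq (H * C) :=
  flatten [seq flatten [seq
     [seq (muH p.1 (alHi r.1), muC (act (alCi p.2) (alHi (alHi r.2))) q.2)
     | r <- D q.1] | q <- y] | p <- x].

(* Main.v *)
Require Import Defs.
From mathcomp Require Import all_boot all_order all_algebra.
Set Implicit Arguments. Unset Strict Implicit. Unset Printing Implicit Defensive.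
Import Order.TTheory GRing.Theory Num.Theory.
Local Open Scope ring_scope.

Section Gen.
Variable k : fieldType.

Lemma lin0 (V W : lmodType k) (g : V -> W) : linmap g -> g 0 = 0.
Proof.
move=> lg; have := lg 1 0 0; rewrite addr0 !scale1r => h.
by apply: (addrI (g 0)); rewrite addr0 -h.
Qed.

Lemma linZ (V W : lmodType k) (g : V -> W) a x : linmap g -> g (a *: x) = a *: g x.
Proof. by move=> lg; have := lg a x 0; rewrite (lin0 lg) !addr0. Qed.

Lemma linD (V W : lmodType k) (g : V -> W) x y : linmap g -> g (x + y) = g x + g y.
Proof. by move=> lg; have := lg 1 x y; rewrite !scale1r. Qed.

Lemma linsum (V W : lmodType k) (g : V -> W) I (s : seq I) (F : I -> V) :
  linmap g -> g (\sum_(i <- s) F i) = \sum_(i <- s) g (F i).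
Proof.
move=> lg; elim: s => [|i s IH]; first by rewrite !big_nil lin0.
by rewrite !big_cons linD // IH.
Qed.

Lemma lin_id (V : lmodType k) : linmap (fun u : V => u).
Proof. by []. Qed.

Lemma lin_comp (V W X : lmodType k) (f : W -> X) (g : V -> W) :
  linmap f -> linmap g -> linmap (fun u => f (g u)).
Proof. by move=> lf lg a x y; rewrite lg lf. Qed.

Lemma lin_app1 (V W X Y : lmodType k) (F : W -> X -> Y) (g : V -> W) y :
  bilin F -> linmap g -> linmap (fun u => F (g u) y).
Proof. by case=> l1 _ lg a x z; rewrite lg l1. Qed.

Lemma lin_app2 (V W X Y : lmodType k) (F : W -> X -> Y) (g : V -> X) w :
  bilin F -> linmap g -> linmap (fun u => F w (g u)).
Proof. by case=> _ l2 lg a x z; rewrite lg l2. Qed.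

Lemma lin_sum (V W : lmodType k) I (s : seq I) (G : I -> V -> W) :
  (forall q, linmap (G q)) -> linmap (fun u => \sum_(q <- s) G q u).
Proof.
move=> lG a x y; rewrite scaler_sumr -big_split; apply: eq_bigr => q _.
exact: lG.
Qed.

Lemma bilin_intro (V W U : lmodType k) (F : V -> W -> U) :
  (forall w, linmap (fun v => F v w)) -> (forall v, linmap (fun w => F v w)) ->
  bilin F.
Proof. by move=> h1 h2; split. Qed.

Lemma bl1 (V W U : lmodType k) (F : V -> W -> U) (bF : bilin F) a x w :
  F (a *: x) w = a *: F x w.
Proof. by case: bF => l1 _; rewrite (linZ _ _ (l1 w)). Qed.

Lemma bl2 (V W U : lmodType k) (F : V -> W -> U) (bF : bilin F) a x w :
  F w (a *: x) = a *: F w x.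
Proof. by case: bF => _ l2; rewrite (linZ _ _ (l2 w)). Qed.

Lemma bD1 (V W U : lmodType k) (F : V -> W -> U) (bF : bilin F) a x y w :
  F (a *: x + y) w = a *: F x w + F y w.
Proof. by case: bF => l1 _; rewrite (l1 w). Qed.

Lemma bD2 (V W U : lmodType k) (F : V -> W -> U) (bF : bilin F) a x y w :
  F w (a *: x + y) = a *: F w x + F w y.
Proof. by case: bF => _ l2; rewrite (l2 w). Qed.

Lemma bsum1 (V W U : lmodType k) (F : V -> W -> U) (bF : bilin F) I (s : seq I) X w :
  F (\sum_(i <- s) X i) w = \sum_(i <- s) F (X i) w.
Proof. by case: bF => l1 _; rewrite (linsum _ _ (l1 w)). Qed.

Lemma bsum2 (V W U : lmodType k) (F : V -> W -> U) (bF : bilin F) I (s : seq I) X w :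
  F w (\sum_(i <- s) X i) = \sum_(i <- s) F w (X i).
Proof. by case: bF => _ l2; rewrite (linsum _ _ (l2 w)). Qed.

Lemma teqE (V W U : lmodType k) (s t : seq (V * W)) (F : V * W -> U) :
  teq2 s t -> bilin (fun a b => F (a, b)) ->
  \sum_(p <- s) F p = \sum_(p <- t) F p.
Proof.
move=> e bF.
have E : forall s0, \sum_(p <- s0) F p = tsum2 (fun a b => F (a, b)) s0.
  by move=> s0; apply: eq_bigr => -[].
by rewrite !E; apply: e.
Qed.

Lemma sumDlin (V W1 W2 U : lmodType k) (D : V -> seq (W1 * W2))
  (F : W1 * W2 -> U) a x y :
  lin_to2 D -> bilin (fun a b => F (a, b)) ->
  \sum_(r <- D (a *: x + y)) F r = a *: \sum_(r <- D x) F r + \sum_(r <- D y) F r.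
Proof.
move=> lD bF; rewrite (teqE (lD a x y) bF) big_cat /= big_map scaler_sumr.
congr (_ + _); apply: eq_bigr => -[u v] _ /=.
by case: bF => l1 _; rewrite (linZ _ _ (l1 v)).
Qed.

Lemma lin_sumD (V V' W1 W2 U : lmodType k) (D : V -> seq (W1 * W2))
  (F : W1 * W2 -> U) (g : V' -> V) :
  lin_to2 D -> bilin (fun a b => F (a, b)) -> linmap g ->
  linmap (fun u => \sum_(r <- D (g u)) F r).
Proof. by move=> lD bF lg a x y; rewrite lg (sumDlin _ _ _ lD bF). Qed.

Lemma sumDZ (V W1 W2 U : lmodType k) (D : V -> seq (W1 * W2))
  (F : W1 * W2 -> U) a x :
  lin_to2 D -> bilin (fun a b => F (a, b)) ->
  \sum_(r <- D (a *: x)) F r = a *: \sum_(r <- D x) F r.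
Proof.
move=> lD bF.
have l := lin_sumD lD bF (@lin_id V).
by rewrite -(addr0 (a *: x)) l (lin0 l) addr0.
Qed.

End Gen.

Lemma bilin_comp (k : fieldType) (V W V' W' U : lmodType k) (F : V * W -> U)
  (g1 : V' -> V) (g2 : W' -> W) :
  bilin (fun a b => F (a, b)) -> linmap g1 -> linmap g2 ->
  bilin (fun a b => F (g1 a, g2 b)).
Proof.
case=> l1 l2 lg1 lg2; split=> [w|v] a x y /=.
  by rewrite lg1 (l1 (g2 w)).
by rewrite lg2 (l2 (g1 v)).
Qed.

Lemma sum_flatmap2 (k : fieldType) (U : lmodType k) (I J X : Type) (s : seq I)
  (T : I -> seq J) (F : I -> J -> X) (G : X -> U) :
  \sum_(x <- flatten [seq [seq F p q | q <- T p] | p <- s]) G x =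
  \sum_(p <- s) \sum_(q <- T p) G (F p q).
Proof. by rewrite big_flatten big_map; apply: eq_bigr => p _; rewrite big_map. Qed.

Ltac lin := repeat first
  [ exact: lin_id
  | progress (apply: bilin_intro => ? /=)
  | (apply: lin_sum => ? /=)
  | (apply: lin_sumD; [eassumption| | ])
  | (apply: lin_app2; [eassumption|])
  | (apply: lin_app1; [eassumption|])
  | (apply: lin_comp; [eassumption|])
  | eassumption ].

Theorem theorem3p13 (k : fieldType) (H : lmodType k)
  (muH : H -> H -> H) (D : H -> seq (H * H)) (alH alHi : H -> H)
  (C : lmodType k) (muC : C -> C -> C) (alC alCi : C -> C)
  (act : C -> H -> C) :
  hom_bialgebra muH D alH ->
  right_module_hom_algebra muH D alH muC alC act ->
  cancel alH alHi -> cancel alHi alH ->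
  cancel alC alCi -> cancel alCi alC ->
  hom_twisting muH alH muC alC (smashR D act alHi alCi) /\
  hom_assoc_tensor (smash_mul muH D muC act alHi alCi) (tmap alH alC).
Proof.
move=> [[bmuH lalH alHM assH] lD coas Dmul Dal]
  [[bmuC lalC alCM assC] bact alCact actact actmul] hK hiK cK ciK.
have lhi : linmap alHi.
  by move=> a x y; apply: (can_inj hK); rewrite lalH !hiK.
have lci : linmap alCi.
  by move=> a x y; apply: (can_inj cK); rewrite lalC !ciK.
have hiM x y : alHi (muH x y) = muH (alHi x) (alHi y).
  by apply: (can_inj hK); rewrite alHM !hiK.
have ciM x y : alCi (muC x y) = muC (alCi x) (alCi y).
  by apply: (can_inj cK); rewrite alCM !ciK.
have ciact c h : alCi (act c h) = act (alCi c) (alHi h).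
  by apply: (can_inj cK); rewrite alCact !ciK hiK.
have sDal (U : lmodType k) (F : H * H -> U) x : bilin (fun a b => F (a, b)) ->
    \sum_(s <- D (alH x)) F s = \sum_(s <- D x) F (alH s.1, alH s.2).
  by move=> bF; rewrite (teqE (Dal x) bF) big_map.
have sDhi (U : lmodType k) (F : H * H -> U) x : bilin (fun a b => F (a, b)) ->
    \sum_(s <- D (alHi x)) F s = \sum_(s <- D x) F (alHi s.1, alHi s.2).
  move=> bF; rewrite -{2}[x]hiK sDal; last exact: (bilin_comp bF lhi lhi).
  by apply: eq_bigr => -[u v] _ /=; rewrite !hK.
have sDhi3 (U : lmodType k) (F : H * H -> U) x : bilin (fun a b => F (a, b)) ->
    \sum_(s <- D (alHi (alHi (alHi x)))) F s =
    \sum_(s <- D x) F (alHi (alHi (alHi s.1)), alHi (alHi (alHi s.2))).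
  move=> bF; rewrite sDhi // sDhi /=; last exact: bilin_comp.
  by rewrite sDhi /=; last by apply: bilin_comp => //; apply: lin_comp.
have coasE (U : lmodType k) (G : H -> H -> H -> U) h : trilin G ->
    \sum_(p <- D h) \sum_(q <- D p.1) G q.1 q.2 (alH p.2) =
    \sum_(p <- D h) \sum_(q <- D p.2) G (alH p.1) q.1 q.2.
  move=> tG; have := coas h U G tG; rewrite /tsum3 !sum_flatmap2 /=.
  by [].
have sm (U : lmodType k) (G : H * C -> U) x y :
    \sum_(z <- smash_mul muH D muC act alHi alCi x y) G z =
    \sum_(p <- x) \sum_(q <- y) \sum_(r <- D q.1)
       G (muH p.1 (alHi r.1), muC (act (alCi p.2) (alHi (alHi r.2))) q.2).
  by rewrite /smash_mul big_flatten big_map; apply: eq_bigr => p _; rewrite sum_flatmap2.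
split.
  split.
  - split.
    + move=> h a x y U f bf; rewrite /tsum2 /smashR big_cat /= !big_map.
      rewrite -big_split; apply: eq_bigr => r _ /=.
      by rewrite lci (bD1 bact) (bD2 bf) (bl1 bf).
    + move=> c a x y U f bf; rewrite /tsum2 /smashR big_map.
      rewrite (sumDlin _ _ _ lD); last by lin.
      rewrite big_cat /= !big_map scaler_sumr; congr (_ + _).
      by apply: eq_bigr => r _ /=; rewrite (bl1 bf).
  - move=> c h U f bf; rewrite /tsum2 /smashR /tmap !big_map /=.
    rewrite sDal /=; last by lin.
    by apply: eq_bigr => r _; rewrite alCact ciK !hiK !hK cK.
  - move=> c h h' U f bf; rewrite /tsum2 /smashR sum_flatmap2 big_map /=.
    rewrite (teqE (Dmul h h')) /=; last by lin.
    rewrite sum_flatmap2 big_map; apply: eq_bigr => p _; rewrite big_map.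
    apply: eq_bigr => q _ /=.
    by rewrite cK !hiM alCact ciK actact ciK.
  - move=> c c' h U f bf; rewrite /tsum2 /smashR big_map sDal /=; last by lin.
    pose G a b w := f (alHi a) (muC (act (alCi c) (alHi (alHi (alHi b))))
                                   (act (alCi c') (alHi (alHi (alHi w))))).
    have tG : trilin G.
      by rewrite /G; split=> *; lin.
    transitivity (\sum_(p <- D h) \sum_(q <- D p.2) G (alH p.1) q.1 q.2).
      apply: eq_bigr => r _; rewrite !hK ciM.
      have e : alHi r.2 = alH (alH (alHi (alHi (alHi r.2)))) by rewrite !hiK.
      rewrite e actmul sDhi3; last by lin.
      by rewrite (bsum2 bf); apply: eq_bigr => t _; rewrite /G hK.
    rewrite -coasE // sum_flatmap2 big_map; apply: eq_bigr => q _ /=.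
    rewrite big_map sDhi /=; last by lin.
    by apply: eq_bigr => t _; rewrite /G !hiK hK.
split.
- split.
  + move=> x x' y e U f bf; rewrite /tsum2 !sm /=.
    by apply: (teqE e); lin.
  + move=> x y y' e U f bf; rewrite /tsum2 !sm /= exchange_big /=.
    symmetry; rewrite exchange_big /=; symmetry.
    by apply: (teqE e); lin.
  + move=> x x' e U f bf; rewrite /tsum2 /tmap !big_map /=.
    by apply: (teqE e); lin.
- move=> a x y U f bf; rewrite /tsum2 /tscale !big_map !sm !big_map /=.
  apply: eq_bigr => p _; apply: eq_bigr => q _; apply: eq_bigr => r _ /=.
  by rewrite (bl1 bmuH) (bl1 bf).
- move=> a x y U f bf; rewrite /tsum2 /tscale !big_map !sm /=.
  apply: eq_bigr => p _; rewrite big_map; apply: eq_bigr => q _ /=.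
  rewrite (sumDZ _ _ lD); last by lin.
  by rewrite scaler_sumr; apply: eq_bigr => r _; rewrite (bl1 bf).
- move=> x y U f bf; rewrite /tsum2 /tmap big_map !sm big_map.
  apply: eq_bigr => p _; rewrite big_map; apply: eq_bigr => q _ /=.
  rewrite sDal /=; last by lin.
  by apply: eq_bigr => r _; rewrite alHM alCM alCact !hiK !ciK !hK cK.
move=> x y z U f bf.
pose K (p q w : H * C) (t r v : H * H) : U :=
  f (muH (muH p.1 (alHi t.1)) r.1)
    (muC (act p.2 (muH (alHi (alHi t.2)) (alHi (alHi (alHi v.1)))))
         (muC (act (alCi q.2) (alHi (alHi (alHi v.2)))) w.2)).
transitivity (\sum_(p <- x) \sum_(q <- y) \sum_(w <- z) \sum_(t <- D q.1)
   \sum_(r <- D w.1) \sum_(v <- D r.2) K p q w t r v).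
  rewrite /tsum2 sm big_map; apply: eq_bigr => p _ /=.
  rewrite sm; apply: eq_bigr => q _; apply: eq_bigr => w _ /=.
  pose G (t : H * H) (a b c : H) : U :=
    f (muH (alH p.1) (alHi (muH t.1 (alHi a))))
      (muC (act (alCi (alC p.2)) (alHi (alHi (muH t.2 (alHi b)))))
           (muC (act (alCi q.2) (alHi (alHi (alHi c)))) w.2)).
  transitivity (\sum_(r <- D w.1) \sum_(t <- D q.1) \sum_(v <- D r.1)
                   G t v.1 v.2 (alH r.2)).
    apply: eq_bigr => r _; rewrite (teqE (Dmul _ _)) /=; last by lin.
    rewrite sum_flatmap2; apply: eq_bigr => t _; rewrite sDhi /=; last by lin.
    by apply: eq_bigr => v _; rewrite /G hK.
  rewrite exchange_big /=; apply: eq_bigr => t _.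
  rewrite coasE; last by rewrite /G; split=> *; lin.
  apply: eq_bigr => r _; apply: eq_bigr => v _.
  by rewrite /G /K !hK hiM assH hiK cK !hiM.
symmetry.
rewrite /tsum2 sm sm; apply: eq_bigr => p _; apply: eq_bigr => q _.
rewrite exchange_big /tmap big_map /=; apply: eq_bigr => w _; apply: eq_bigr => t _.
rewrite sDal /=; last by lin.
apply: eq_bigr => r _; rewrite !hK ciM ciact.
have e : alHi r.2 = alH (alH (alHi (alHi (alHi r.2)))) by rewrite !hiK.
rewrite e actmul sDhi3; last by lin.
rewrite (bsum1 bmuC) (bsum2 bf); apply: eq_bigr => v _ /=.
rewrite /K -assC alCact alCact ciK.
by rewrite [alH (alHi (alHi (alHi t.2)))]hiK actact ciK.
Qed.
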